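(* Let $G_1$ and $G_2$ be two vertex-disjoint simple connected graphs with $|V(G_1)|=n_1$, $|V(G_2)|=n_2$, $|E(G_1)|=m_1$, $|E(G_2)|=m_2$. Then the vertex R-join $G_1\dot{\vee}_R G_2$ satisfies \[ F(G_1\dot{\vee}_R G_2)=8F(G_1)+F(G_2)+12n_2M_1(G_1)+3n_1M_1(G_2)+12m_1n_2^{2}+6m_2n_1^{2}+n_1n_2(n_1^2+n_2^2)+8m_1 . \]
   Context: For a simple graph $G$ and $v\in V(G)$, $d_G(v)$ is the degree of $v$. The first Zagreb index is $M_1(G)=\sum_{v\in V(G)}d_G(v)^2$ and the F-index is $F(G)=\sum_{v\in V(G)}d_G(v)^3$. The graph $R(G)$ is obtained from $G$ by inserting a new vertex into each edge of $G$ and joining each new vertex to the two end vertices of the corresponding edge (so the original edges of $G$ are kept); let $I(G)$ denote the set of these new vertices, so $V(R(G))=V(G)\cup I(G)$. The vertex R-join $G_1\dot{\vee}_R G_2$ is the graph obtained from $R(G_1)$ and $G_2$ (taken vertex-disjoint) by joining each vertex of $V(G_1)$ to every vertex of $G_2$ by an edge. *)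

(* Defs.v *)
From mathcomp Require Import all_boot.
Set Implicit Arguments. Unset Strict Implicit. Unset Printing Implicit Defensive.

Section Graphs.
Variable T : finType.
Variable e : rel T.

Definition simple_graph : Prop := symmetric e /\ irreflexive e.
Definition connected_graph : Prop := forall x y : T, connect e x y.

Definition deg (x : T) : nat := #|[set y | e x y]|.
Definition M1 : nat := \sum_(x : T) deg x ^ 2.
Definition Findex : nat := \sum_(x : T) deg x ^ 3.
Definition edges : {set {set T}} := [set A : {set T} | [exists x, exists y, e x y && (A == [set x; y])]].
Definition edge_type : finType := {A : {set T} | A \in edges}.
End Graphs.

Section RJoin.
Variables (T1 T2 : finType) (e1 : rel T1) (e2 : rel T2).

(* vertices of G1 vR G2: V(G1) + I(G1) + V(G2) *)
Definition rjoin_vertex : finType := ((T1 + edge_type e1) + T2)%type.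

Definition rjoin_adj (u v : rjoin_vertex) : bool :=
  match u, v with
  | inl (inl x), inl (inl y) => e1 x y
  | inl (inl x), inl (inr A) => x \in val A     (* subdivision vertex joined to ends *)
  | inl (inr A), inl (inl x) => x \in val A
  | inl (inl _), inr _ => true
  | inr _, inl (inl _) => true
  | inr a, inr b => e2 a b
  | _, _ => false
  end.
End RJoin.

(* Main.v *)
Require Import Defs.
From mathcomp Require Import all_boot.
From mathcomp Require Import zify.

Set Implicit Arguments. Unset Strict Implicit. Unset Printing Implicit Defensive.

Lemma sum_b2n (T : finType) (P : pred T) : \sum_x (P x : nat) = #|P|.
Proof.
rewrite -sum1_card [RHS]big_mkcond /=; apply: eq_bigr => x _; by rewrite unfold_in; case: (P x).
Qed.

Lemma degE (T : finType) (e : rel T) x : deg e x = \sum_y (e x y : nat).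
Proof.
rewrite sum_b2n /deg; apply: eq_card => y; by rewrite inE.
Qed.

Lemma deg_edges (T : finType) (e : rel T) : simple_graph e -> forall x,
  \sum_(A : edge_type e) (x \in val A : nat) = deg e x.
Proof.
move=> [Hsym Hirr] x.
rewrite -(big_sub (edges e) (fun B => (x \in B) : nat)).
rewrite big_mkcond /=.
have -> : \sum_i (if i \in edges e then (x \in i : nat) else 0)
   = \sum_i ((i \in edges e) && (x \in i) : nat).
  by apply: eq_bigr => i _; case: (i \in edges e).
rewrite sum_b2n /deg.
have H : [pred i | (i \in edges e) && (x \in i)] =i
          [set [set x; y] | y in [set y | e x y]].
  move=> B; rewrite !inE; apply/idP/imsetP.
  - case/andP => /existsP [a /existsP [b /andP [eab /eqP ->]]].
    rewrite !inE => /orP [/eqP -> | /eqP ->].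
    + by exists b; rewrite ?inE.
    + by exists a; [rewrite inE Hsym | rewrite setUC].
  - move=> [y]; rewrite inE => exy ->.
    rewrite !inE eqxx /= andbT.
    by apply/existsP; exists x; apply/existsP; exists y; rewrite exy eqxx.
rewrite (eq_card H) card_in_imset //.
move=> y1 y2; rewrite !inE => e1 e2 Heq.
have : y1 \in [set x; y2] by rewrite -Heq !inE eqxx orbT.
rewrite !inE => /orP [/eqP Hx | /eqP //].
by rewrite Hx Hirr in e1.
Qed.

Lemma card_edge (T : finType) (e : rel T) : simple_graph e ->
  forall A : edge_type e, #|val A| = 2.
Proof.
move=> [Hsym Hirr] [A /=]; rewrite inE => /existsP [a /existsP [b /andP [eab /eqP ->]]].
rewrite cards2; case: eqP => // Hab; by rewrite Hab Hirr in eab.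
Qed.

Lemma handshake (T : finType) (e : rel T) : simple_graph e ->
  \sum_x deg e x = 2 * #|edges e|.
Proof.
move=> Hs.
under eq_bigr => x _ do rewrite -(deg_edges Hs x).
rewrite exchange_big /=.
under eq_bigr => A _ do rewrite (sum_b2n (fun x => x \in val A)).
have -> : \sum_(A : edge_type e) #|(fun x => x \in val A)| = \sum_(A : edge_type e) 2.
  apply: eq_bigr => A _; rewrite -(card_edge Hs A); by apply: eq_card.
rewrite sum_nat_const card_sig mulnC; congr (_ * _); by apply: eq_card.
Qed.

Section RJ.
Variables (T1 T2 : finType) (e1 : rel T1) (e2 : rel T2).
Hypotheses (Hs1 : simple_graph e1) (Hs2 : simple_graph e2).

Lemma sum_one (T : finType) : \sum_(i : T) (true : nat) = #|T|.
Proof. by rewrite sum1_card. Qed.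

Lemma sum_zero (T : finType) : \sum_(i : T) (false : nat) = 0.
Proof. by rewrite big1. Qed.

Lemma deg_rj1 x : deg (@rjoin_adj T1 T2 e1 e2) (inl (inl x)) = 2 * deg e1 x + #|T2|.
Proof.
rewrite degE big_sumType /= big_sumType /= -degE deg_edges // sum_one.
by rewrite mul2n -addnn.
Qed.

Lemma deg_rj2 A : deg (@rjoin_adj T1 T2 e1 e2) (inl (inr A)) = 2.
Proof.
rewrite degE big_sumType /= big_sumType /= !sum_zero.
rewrite (sum_b2n (fun x => x \in val A)) -(card_edge Hs1 A).
rewrite !addn0; by apply: eq_card.
Qed.

Lemma deg_rj3 y : deg (@rjoin_adj T1 T2 e1 e2) (inr y) = deg e2 y + #|T1|.
Proof.
rewrite degE big_sumType /= big_sumType /= -degE sum_one sum_zero.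
by rewrite addn0 addnC.
Qed.
End RJ.

Lemma sum_cube (T:finType) (f: T -> nat) a b :
  \sum_x (a * f x + b)^3 = a^3 * \sum_x f x ^ 3 + 3*a^2*b * \sum_x f x ^ 2
     + 3*a*b^2*\sum_x f x + #|T| * b^3.
Proof.
rewrite -[#|T|]sum_one !big_distrr !big_distrl /= -!big_split /=.
apply: eq_bigr => x _.
rewrite !expnS !expn0 !muln1 !mulnDl !mulnDr. lia.
Qed.

Theorem theorem3 (T1 T2 : finType) (e1 : rel T1) (e2 : rel T2) :
  simple_graph e1 -> simple_graph e2 ->
  connected_graph e1 -> connected_graph e2 ->
  let n1 := #|T1| in let n2 := #|T2| in
  let m1 := #|edges e1| in let m2 := #|edges e2| in
  Findex (@rjoin_adj T1 T2 e1 e2) =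
    8 * Findex e1 + Findex e2 + 12 * n2 * M1 e1 + 3 * n1 * M1 e2
    + 12 * m1 * n2 ^ 2 + 6 * m2 * n1 ^ 2 + n1 * n2 * (n1 ^ 2 + n2 ^ 2) + 8 * m1.
Proof.
move=> Hs1 Hs2 _ _ n1 n2 m1 m2.
rewrite /Findex big_sumType /= big_sumType /=.
under eq_bigr => x _ do rewrite (@deg_rj1 T1 T2 e1 e2 Hs1 x).
under [X in _ + X + _]eq_bigr => A _ do rewrite (@deg_rj2 T1 T2 e1 e2 Hs1 A).
under [X in _ + X]eq_bigr => y _ do rewrite (@deg_rj3 T1 T2 e1 e2 y) -[deg e2 y]mul1n.
rewrite !sum_cube sum_nat_const card_sig !handshake // /M1.
have -> : #|[pred x in edges e1]| = m1 by apply: eq_card.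
rewrite /n1 /n2 /m1 /m2.
move: (\sum_x deg e1 x ^ 3) (\sum_x deg e1 x ^ 2) (\sum_x deg e2 x ^ 3) (\sum_x deg e2 x ^ 2)
  #|T1| #|T2| #|edges e1| #|edges e2| => a b c d p q r s.
rewrite !expnS !expn0 !muln1. lia.
Qed.
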